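(* Let $A\in\mathbb Z^{d\times n}$ with $\ker(A)\cap\mathbb N^n=\{0\}$, and let $I(A)\subseteq G(A)$ be the set of $g\in G(A)$ whose distance is not reduced by any element of $D(A)$. If $z\in\ker(A)\setminus G(A)$ is such that no element of $D(A)$ reduces the distance of $z$, then for any decomposition $z=g_1+\dots+g_k$ with $g_i\in G(A)$, $z^+=\sum_i g_i^+$ and $z^-=\sum_i g_i^-$, we have $g_i\in I(A)$ for each $i\in\{1,\dots,k\}$.
   Context: For $z\in\mathbb Z^n$, $z^\pm\in\mathbb N^n$ are the unique vectors with disjoint supports and $z=z^+-z^-$; $\|\cdot\|$ is the $1$-norm; $\le$ is coordinatewise. $G(A)$ is the set of nonzero $z\in\ker(A)$ admitting no decomposition $z=u+v$ with $u,v\in\ker(A)\setminus\{0\}$, $z^+=u^++v^+$, $z^-=u^-+v^-$. A positive (resp. negative) distance decomposition of $z\in\ker(A)$ is $z=u+v$ with $u,v\in\ker(A)\setminus\{0\}$, $u^+\le z^+$ (resp. $u^-\le z^-$), $\|v\|<\|z\|$; $D(A)$ is the set of nonzero $z\in\ker(A)$ admitting neither a positive nor a negative distance decomposition. For nonzero $w\in\ker(A)$, $u\in\ker(A)$ reduces the distance of $w$ if there exist $(p,q)\in\{(w^+,w^-),(w^-,w^+)\}$ and $\varepsilon\in\{\pm1\}$ with $p+\varepsilon u\in\mathbb N^n$ and $\|p+\varepsilon u-q\|<\|w\|$. *)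

(* Defs.v *)
From mathcomp Require Import all_boot all_order all_algebra.
Set Implicit Arguments. Unset Strict Implicit. Unset Printing Implicit Defensive.
Import Order.TTheory GRing.Theory Num.Theory.
Local Open Scope ring_scope.

Section Defs.
Variables (d n : nat) (A : 'M[int]_(d, n)).

Definition inker (z : 'cV[int]_n) : Prop := A *m z = 0.

Definition vpos (z : 'cV[int]_n) : 'cV[int]_n := \col_i Num.max (z i 0) 0.
Definition vneg (z : 'cV[int]_n) : 'cV[int]_n := \col_i Num.max (- z i 0) 0.

Definition norm1 (z : 'cV[int]_n) : int := \sum_i `|z i 0|.

Definition lev (u v : 'cV[int]_n) : Prop := forall i, u i 0 <= v i 0.
Definition natvec (u : 'cV[int]_n) : Prop := forall i, 0 <= u i 0.

Definition inG (z : 'cV[int]_n) : Prop :=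
  inker z /\ z <> 0 /\
  ~ (exists u v, [/\ inker u /\ inker v, u <> 0 /\ v <> 0, z = u + v,
        vpos z = vpos u + vpos v & vneg z = vneg u + vneg v]).

Definition pos_dist_dec (z : 'cV[int]_n) : Prop :=
  exists u v, [/\ inker u /\ inker v, u <> 0 /\ v <> 0, z = u + v,
     lev (vpos u) (vpos z) & norm1 v < norm1 z].
Definition neg_dist_dec (z : 'cV[int]_n) : Prop :=
  exists u v, [/\ inker u /\ inker v, u <> 0 /\ v <> 0, z = u + v,
     lev (vneg u) (vneg z) & norm1 v < norm1 z].

Definition inD (z : 'cV[int]_n) : Prop :=
  [/\ inker z, z <> 0, ~ pos_dist_dec z & ~ neg_dist_dec z].

Definition reduces (u w : 'cV[int]_n) : Prop :=
  inker u /\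
  exists (p q : 'cV[int]_n) (eps : int),
    [/\ (p, q) = (vpos w, vneg w) \/ (p, q) = (vneg w, vpos w),
        eps = 1 \/ eps = -1,
        natvec (p + eps *: u) &
        norm1 (p + eps *: u - q) < norm1 w].

Definition inI (g : 'cV[int]_n) : Prop :=
  inG g /\ forall u, inD u -> ~ reduces u g.

End Defs.

(* Main.v *)
Require Import Defs.
From mathcomp Require Import all_boot all_order all_algebra.
From mathcomp Require Import zify.
Import Order.TTheory GRing.Theory Num.Theory.
Local Open Scope ring_scope.

Lemma norm1_pn n (w : 'cV[int]_n) :
  norm1 w = \sum_j (vpos w j 0 + vneg w j 0).
Proof. rewrite /norm1; apply: eq_bigr => j _; rewrite !mxE; lia. Qed.

Lemma aux2 (r s x y z : int) : 0 <= s -> 0 <= r ->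
  `|x + r + y - (z + s)| <= r + s + `|x + y - z|.
Proof. lia. Qed.

Lemma keylem n (p q P Q R S u : 'cV[int]_n) (e a b : int) :
  P = p + R -> Q = q + S -> natvec R -> natvec S ->
  natvec (p + e *: u) -> norm1 (p + e *: u - q) < a ->
  a = \sum_j (p j 0 + q j 0) -> b = \sum_j (P j 0 + Q j 0) ->
  natvec (P + e *: u) /\ norm1 (P + e *: u - Q) < b.
Proof.
move=> -> -> nR nS np hlt Ha ->; rewrite Ha in hlt; split.
  move=> j; have := nR j; have := np j; rewrite !mxE => h1 h2; rewrite -addrA addrC -addrA; apply: addr_ge0 => //; rewrite addrC; exact: h1.
apply: (@le_lt_trans _ _ (\sum_j (R j 0 + S j 0) + norm1 (p + e *: u - q))).
  rewrite /norm1 -big_split /=; apply: ler_sum => j _.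
  have := nR j; have := nS j; rewrite !mxE; exact: aux2.
have -> : \sum_j ((p + R) j 0 + (q + S) j 0) =
   \sum_j (p j 0 + q j 0) + \sum_j (R j 0 + S j 0).
  rewrite -big_split /=; apply: eq_bigr => j _; by rewrite !mxE addrACA.
by rewrite [X in _ < X]addrC ltrD2l.
Qed.

Arguments keylem {n p q P Q R S u e a b}.

Theorem proposition8p11 (d n : nat) (A : 'M[int]_(d, n)) :
  (forall z : 'cV[int]_n, inker A z -> natvec z -> z = 0) ->
  forall z : 'cV[int]_n,
    inker A z -> ~ inG A z ->
    (forall u, inD A u -> ~ reduces A u z) ->
    forall (k : nat) (g : 'I_k -> 'cV[int]_n),
      (forall i, inG A (g i)) ->
      z = \sum_(i < k) g i ->
      vpos z = \sum_(i < k) vpos (g i) ->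
      vneg z = \sum_(i < k) vneg (g i) ->
      forall i, inI A (g i).
Proof.
move=> _ z _ _ Hred k g HG _ Hp Hn i; split; first exact: HG.
move=> u Du [Ku [p [q [e [Hpq He Hnat Hlt]]]]].
apply: (Hred u Du); split => //.
set R := \sum_(j < k | j != i) vpos (g j).
set S := \sum_(j < k | j != i) vneg (g j).
have eP : vpos z = vpos (g i) + R by rewrite Hp (bigD1 i).
have eN : vneg z = vneg (g i) + S by rewrite Hn (bigD1 i).
have nR : natvec R by move=> j; rewrite summxE; apply: sumr_ge0 => l _; rewrite mxE le_max lexx orbT.
have nS : natvec S by move=> j; rewrite summxE; apply: sumr_ge0 => l _; rewrite mxE le_max lexx orbT.
case: Hpq => [[-> ->] | [-> ->]] in Hnat Hlt *.
- have [h1 h2] := keylem eP eN nR nS Hnat Hlt (@norm1_pn n (g i)) (@norm1_pn n z).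
  by exists (vpos z), (vneg z), e; split => //; left.
- have [h1 h2] := keylem eN eP nS nR Hnat Hlt
    (etrans (@norm1_pn n (g i)) (eq_bigr _ (fun j _ => addrC _ _)))
    (etrans (@norm1_pn n z) (eq_bigr _ (fun j _ => addrC _ _))).
  by exists (vneg z), (vpos z), e; split => //; right.
Qed.
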